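(* Let $(\mathcal A,\mathcal A_0)$ be an admissible $\mathcal T$-semiring pair and let $S\subseteq\mathcal T$ be a multiplicatively closed subset with $\mathbb 0\notin S$. Put $\hat S=(S\times\{\mathbb 0\})\cup(\{\mathbb 0\}\times S)\subseteq\mathcal A\times\mathcal A$. Then there exists a prime congruence on $\mathcal A$ disjoint from $\hat S$.
   Context: $\mathcal T$ is a multiplicative monoid. An admissible $\mathcal T$-semiring pair $(\mathcal A,\mathcal A_0)$ consists of a semiring $\mathcal A$ containing $\mathcal T$ as a multiplicative submonoid, additively generated by $\mathcal T\cup\{\mathbb 0\}$, and a subset $\mathcal A_0\subseteq\mathcal A$ containing $\mathbb 0$, closed under addition and under multiplication by $\mathcal T$, with $\mathcal A_0\cap\mathcal T=\emptyset$. A congruence on $\mathcal A$ is an equivalence relation on $\mathcal A$ closed (as a subset of $\mathcal A\times\mathcal A$) under componentwise addition and multiplication. The twist product is $(a_1,a_1')\cdot_{tw}(a_2,a_2')=(a_1a_2+a_1'a_2',\ a_1a_2'+a_1'a_2)$; for congruences $\Phi_1,\Phi_2$, $\Phi_1\cdot_{tw}\Phi_2$ is the set of twist products of an element of $\Phi_1$ with an element of $\Phi_2$. A congruence $\Phi$ is prime if for all congruences $\Phi_1,\Phi_2\supseteq\Phi$ with $\Phi_1\cdot_{tw}\Phi_2\subseteq\Phi$ one has $\Phi_1=\Phi$ or $\Phi_2=\Phi$. *)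

(* Defs.v *)
From HB Require Import structures.
From mathcomp Require Import all_boot all_order all_algebra.
Set Implicit Arguments. Unset Strict Implicit. Unset Printing Implicit Defensive.
Import GRing.Theory.
Local Open Scope ring_scope.

Definition admissible_pair (A : comPzSemiRingType) (T A0 : A -> Prop) : Prop :=
  T 1 /\
  (forall x y, T x -> T y -> T (x * y)) /\
  (forall a : A, exists s : seq A, (forall x, x \in s -> T x) /\ a = \sum_(x <- s) x) /\
  A0 0 /\
  (forall x y, A0 x -> A0 y -> A0 (x + y)) /\
  (forall t x, T t -> A0 x -> A0 (t * x)) /\
  (forall x, A0 x -> T x -> False).

Definition congruence (A : comPzSemiRingType) (Phi : A -> A -> Prop) : Prop :=
  [/\ (forall a, Phi a a),
      (forall a b, Phi a b -> Phi b a),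
      (forall a b c, Phi a b -> Phi b c -> Phi a c),
      (forall a b c d, Phi a b -> Phi c d -> Phi (a + c) (b + d))
    & (forall a b c d, Phi a b -> Phi c d -> Phi (a * c) (b * d))].

Definition twist (A : comPzSemiRingType) (p q : A * A) : A * A :=
  (p.1 * q.1 + p.2 * q.2, p.1 * q.2 + p.2 * q.1).

Definition rel_sub (A : Type) (R1 R2 : A -> A -> Prop) : Prop :=
  forall a b, R1 a b -> R2 a b.

Definition rel_eq (A : Type) (R1 R2 : A -> A -> Prop) : Prop :=
  forall a b, R1 a b <-> R2 a b.

Definition twist_prod_sub (A : comPzSemiRingType) (Phi1 Phi2 Phi : A -> A -> Prop) : Prop :=
  forall p q : A * A, Phi1 p.1 p.2 -> Phi2 q.1 q.2 ->
    Phi (twist p q).1 (twist p q).2.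

Definition prime_congruence (A : comPzSemiRingType) (Phi : A -> A -> Prop) : Prop :=
  congruence Phi /\
  forall Phi1 Phi2 : A -> A -> Prop,
    congruence Phi1 -> congruence Phi2 ->
    rel_sub Phi Phi1 -> rel_sub Phi Phi2 ->
    twist_prod_sub Phi1 Phi2 Phi ->
    rel_eq Phi1 Phi \/ rel_eq Phi2 Phi.

Definition S_hat (A : comPzSemiRingType) (S : A -> Prop) (p : A * A) : Prop :=
  (S p.1 /\ p.2 = 0) \/ (p.1 = 0 /\ S p.2).

(* Main.v *)
Require Import Defs.
From mathcomp Require Import all_boot all_order all_algebra.
From mathcomp Require Import boolp classical_sets.
Local Open Scope ring_scope.

Section Proof6.
Variables (A : comPzSemiRingType) (S : A -> Prop).
Hypothesis Smul : forall x y, S x -> S y -> S (x * y).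
Hypothesis S0 : ~ S 0.

Definition good (Phi : A -> A -> Prop) :=
  congruence Phi /\ (forall p : A * A, S_hat S p -> ~ Phi p.1 p.2).

Definition GT := {Phi : A -> A -> Prop | good Phi}.

Definition GR (t s : GT) : bool := `[< rel_sub (sval t) (sval s) >].

Lemma good_eq : good (fun a b => a = b).
Proof.
split; first by split; intros; subst.
move=> [x y] [[Sx Hy]|[Hx Sy]] E /=; simpl in *; subst.
- by apply: S0.
- by apply: S0.
Qed.

Lemma chain_ub (C : set GT) : total_on C GR -> exists t, forall s, C s -> GR s t.
Proof.
move=> tot.
have [ne|em] := pselect (exists t, C t); last first.
  exists (exist _ _ good_eq) => s Cs; by exfalso; apply: em; exists s.
case: ne => t0 Ct0.
pose U := fun a b => exists t, C t /\ sval t a b.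
have Ug : good U.
  have up2 : forall t s, C t -> C s -> exists u, [/\ C u, rel_sub (sval t) (sval u) & rel_sub (sval s) (sval u)].
    move=> t s Ct Cs; case: (tot _ _ Ct Cs) => /asboolP H.
    - by exists s; split=> // a b.
    - by exists t; split=> // a b.
  split; first split.
  - move=> a; exists t0; split=> //; case: (svalP t0) => [[]] //.
  - move=> a b [t [Ct H]]; exists t; split=> //; case: (svalP t) => [[_ sy _ _ _]] _; exact: sy.
  - move=> a b c [t [Ct H1]] [s [Cs H2]]; case: (up2 _ _ Ct Cs) => u [Cu Hu1 Hu2].
    exists u; split=> //; case: (svalP u) => [[_ _ tr _ _]] _; exact: (tr _ b _ (Hu1 _ _ H1) (Hu2 _ _ H2)).
  - move=> a b c d [t [Ct H1]] [s [Cs H2]]; case: (up2 _ _ Ct Cs) => u [Cu Hu1 Hu2].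
    exists u; split=> //; case: (svalP u) => [[_ _ _ ad _]] _; exact: (ad _ _ _ _ (Hu1 _ _ H1) (Hu2 _ _ H2)).
  - move=> a b c d [t [Ct H1]] [s [Cs H2]]; case: (up2 _ _ Ct Cs) => u [Cu Hu1 Hu2].
    exists u; split=> //; case: (svalP u) => [[_ _ _ _ mu]] _; exact: (mu _ _ _ _ (Hu1 _ _ H1) (Hu2 _ _ H2)).
  move=> p Sp [t [Ct H]]; case: (svalP t) => _ D; exact: D p Sp H.
exists (exist _ _ Ug) => s Cs; apply/asboolP => a b H; by exists s.
Qed.

Lemma exists_max : exists t : GT, premaximal GR t.
Proof.
apply: (ZL_preorder (exist _ _ good_eq)).
- by move=> t; apply/asboolP.
- move=> r s t /asboolP H1 /asboolP H2; apply/asboolP => a b H; exact: H2 _ _ (H1 _ _ H).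
- exact: chain_ub.
Qed.

Lemma hit (Phi : A -> A -> Prop) : congruence Phi ->
  (exists p : A * A, S_hat S p /\ Phi p.1 p.2) -> exists s, S s /\ Phi s 0.
Proof.
move=> [_ sy _ _ _] [[x y] [[[Sx Hy]|[Hx Sy]] H]]; simpl in *; subst.
- by exists x.
- by exists y; split=> //; apply: sy.
Qed.

End Proof6.

Theorem mainTheorem6 (A : comPzSemiRingType) (T A0 S : A -> Prop) :
  admissible_pair T A0 ->
  (forall x, S x -> T x) ->
  (forall x y, S x -> S y -> S (x * y)) ->
  ~ S 0 ->
  exists Phi : A -> A -> Prop,
    prime_congruence Phi /\ (forall p : A * A, S_hat S p -> ~ Phi p.1 p.2).
Proof.
move=> _ _ Smul S0.
have [[Phi [cP dP]] Hmax] := @exists_max A S S0.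
exists Phi; split=> //; split=> // P1 P2 c1 c2 s1 s2 tw.
have maxl : forall Q, congruence Q -> rel_sub Phi Q ->
   (forall p : A * A, S_hat S p -> ~ Q p.1 p.2) -> rel_eq Q Phi.
  move=> Q cQ sQ dQ.
  have gQ : good A S Q by split.
  have /asboolP := Hmax (exist _ _ gQ) (introT (asboolP _) sQ) => /= H a b; split.
  - exact: H.
  - exact: sQ.
have [d1|n1] := pselect (forall p : A * A, S_hat S p -> ~ P1 p.1 p.2).
  by left; apply: maxl.
have [d2|n2] := pselect (forall p : A * A, S_hat S p -> ~ P2 p.1 p.2).
  by right; apply: maxl.
exfalso.
have e1 : exists p : A * A, S_hat S p /\ P1 p.1 p.2.
  apply: contra_notP n1 => H p Sp Pp; apply: H; by exists p.
have e2 : exists p : A * A, S_hat S p /\ P2 p.1 p.2.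
  apply: contra_notP n2 => H p Sp Pp; apply: H; by exists p.
have [s [Ss Hs]] := @hit A S P1 c1 e1.
have [t [St Ht]] := @hit A S P2 c2 e2.
have := tw (s, 0) (t, 0) Hs Ht.
rewrite /twist /=.
have E1 : (s * 0 + 0 * t = 0 :> A) by rewrite GRing.mulr0 GRing.mul0r GRing.addr0.
have E2 : (s * t + 0 * 0 = s * t :> A) by rewrite GRing.mul0r GRing.addr0.
rewrite E1 E2 => H.
apply: (dP (s * t, 0)); [left; split; [exact: Smul | reflexivity] | exact: H].
Qed.
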